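(* Let $\mathcal{H},\mathcal{K}$ be Hilbert spaces, let $(\omega_k)_{k\ge0}$ be a sequence of strictly positive weights, set $\beta(0)=1$ and $\beta(n)=\omega_0\cdots\omega_{n-1}$ for $n\ge1$, and suppose $$\sup_{n,k\ge0}\frac{\beta(n+k)}{\beta(n)}<\infty.$$ Let $S_\omega\in\mathcal{B}(\ell^2(\mathcal{H}))$ be the unilateral weighted shift $S_\omega(x_0,x_1,\ldots)=(0,\omega_0x_0,\omega_1x_1,\ldots)$. Let $T\in\mathcal{B}(\mathcal{K})$ be similar to a contraction and let $X\in\mathcal{B}(\ell^2(\mathcal{H}),\mathcal{K})$. Put $$R(X)=\begin{bmatrix}T & X\\ 0 & S_\omega\end{bmatrix},\qquad R(0)=T\oplus S_\omega\qquad\text{in }\mathcal{B}(\mathcal{K}\oplus\ell^2(\mathcal{H})).$$ Suppose there is a constant $s$ such that for every $N\in\mathbb{N}$ and all $x_0,\ldots,x_N\in\mathcal{H}_0$, $$\Big\|\sum_{n=0}^{N}\frac{1}{\beta(n)}\big(R(X)^n-R(0)^n\big)x_n\Big\|\le s\Big(\sum_{n=0}^N\|x_n\|^2\Big)^{1/2},$$ where $\mathcal{H}_0=\{0\}\oplus(\mathcal{H}\oplus\{0\}\oplus\{0\}\oplus\cdots)\subset\mathcal{K}\oplus\ell^2(\mathcal{H})$ (i.e. $R(X)$ is $\beta$-quadratically near $R(0)$ modulo $\mathcal{H}$). Then $R(X)$ is similar to a contraction.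
   Context: Two operators $A,C$ on a Hilbert space $\mathcal{E}$ are $\beta$-quadratically near modulo a subspace $\mathcal{E}_0$ if there is $s$ with $\|\sum_{n=0}^N\beta(n)^{-1}(A^n-C^n)x_n\|\le s(\sum_{n=0}^N\|x_n\|^2)^{1/2}$ for all $N$ and all $x_0,\ldots,x_N\in\mathcal{E}_0$. An operator is similar to a contraction if it is conjugate by an invertible operator to an operator of norm at most 1. *)

(* Defs.v *)
From mathcomp Require Import all_boot all_algebra.
From mathcomp Require Import boolp classical_sets reals functions.
From mathcomp.real_closed Require Export complex.
Set Implicit Arguments. Unset Strict Implicit. Unset Printing Implicit Defensive.
Import GRing.Theory Num.Theory.
Local Open Scope ring_scope.

Definition inner_product (R : realType) (V : lmodType R[i]) (ip : V -> V -> R[i]) : Prop :=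
  [/\ (forall (a : R[i]) (x y z : V), ip (a *: x + y) z = a * ip x z + ip y z),
      (forall x y : V, ip y x = (ip x y)^*),
      (forall x : V, 0 <= ip x x) &
      (forall x : V, ip x x = 0 -> x = 0)].

Definition ipnorm (R : realType) (V : lmodType R[i]) (ip : V -> V -> R[i]) (x : V) : R :=
  Num.sqrt (complex.Re (ip x x)).

Definition ip_complete (R : realType) (V : lmodType R[i]) (ip : V -> V -> R[i]) : Prop :=
  forall u : nat -> V,
    (forall e : R, 0 < e -> exists N, forall m n, (N <= m)%N -> (N <= n)%N ->
        ipnorm ip (u m - u n) < e) ->
    exists l : V, forall e : R, 0 < e -> exists N, forall n, (N <= n)%N ->
        ipnorm ip (u n - l) < e.

Definition hilbert_space (R : realType) (V : lmodType R[i]) (ip : V -> V -> R[i]) : Prop :=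
  inner_product ip /\ ip_complete ip.

(** Bounded linear operators between (subspaces, given by predicates, of)
    normed spaces.  [P] is the carrier subspace, [nrm] the norm. *)
Definition bounded_op (R : realType) (U V : lmodType R[i])
    (PU : U -> Prop) (nU : U -> R) (PV : V -> Prop) (nV : V -> R) (A : U -> V) : Prop :=
  [/\ (forall u, PU u -> PV (A u)),
      (forall (a : R[i]) u w, PU u -> PU w -> A (a *: u + w) = a *: A u + A w) &
      exists c : R, forall u, PU u -> nV (A u) <= c * nU u].

Definition similar_to_contraction (R : realType) (V : lmodType R[i])
    (P : V -> Prop) (nrm : V -> R) (A : V -> V) : Prop :=
  exists L Linv : V -> V,
    [/\ bounded_op P nrm P nrm L, bounded_op P nrm P nrm Linv,
        (forall v, P v -> Linv (L v) = v /\ L (Linv v) = v) &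
        (forall v, P v -> nrm (Linv (A (L v))) <= nrm v)].

Definition l2_mem (R : realType) (H : lmodType R[i]) (ip : H -> H -> R[i])
    (x : nat -> H) : Prop :=
  exists M : R, forall N, \sum_(n < N) ipnorm ip (x n) ^+ 2 <= M.

Definition l2_sqnorm (R : realType) (H : lmodType R[i]) (ip : H -> H -> R[i])
    (x : nat -> H) : R :=
  sup [set r : R | exists N, r = \sum_(n < N) ipnorm ip (x n) ^+ 2]%classic.

Definition l2_norm (R : realType) (H : lmodType R[i]) (ip : H -> H -> R[i])
    (x : nat -> H) : R := Num.sqrt (l2_sqnorm ip x).

Definition sum_mem (R : realType) (K H : lmodType R[i]) (ipH : H -> H -> R[i])
    (v : K * (nat -> H)) : Prop := l2_mem ipH v.2.

Definition sum_norm (R : realType) (K H : lmodType R[i])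
    (ipK : K -> K -> R[i]) (ipH : H -> H -> R[i]) (v : K * (nat -> H)) : R :=
  Num.sqrt (ipnorm ipK v.1 ^+ 2 + l2_sqnorm ipH v.2).

Definition beta (R : realType) (w : nat -> R) (n : nat) : R := \prod_(k < n) w k.

Definition wshift (R : realType) (H : lmodType R[i]) (w : nat -> R) (x : nat -> H) :
    nat -> H :=
  fun n => if n is n'.+1 then ((w n')%:C)%C *: x n' else 0.

Definition RX (R : realType) (K H : lmodType R[i]) (T : K -> K)
    (X : (nat -> H) -> K) (w : nat -> R) (v : K * (nat -> H)) : K * (nat -> H) :=
  (T v.1 + X v.2, wshift w v.2).

Definition R0 (R : realType) (K H : lmodType R[i]) (T : K -> K)
    (w : nat -> R) (v : K * (nat -> H)) : K * (nat -> H) :=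
  (T v.1, wshift w v.2).

Definition embH0 (R : realType) (K H : lmodType R[i]) (h : H) : K * (nat -> H) :=
  (0, fun n => if n == 0%N then h else 0).

(* Main.v *)
Require Import Defs.
From mathcomp Require Import all_boot all_order all_algebra.
From mathcomp Require Import boolp classical_sets reals functions.
From mathcomp.real_closed Require Import complex.
From mathcomp Require Import ring lra.
From Stdlib Require Import ClassicalEpsilon.
Set Implicit Arguments. Unset Strict Implicit. Unset Printing Implicit Defensive.
Import Order.TTheory GRing.Theory Num.Theory.
Local Open Scope ring_scope.


Lemma ip0l (R : realType) (V : lmodType R[i]) (ip : V -> V -> R[i])
  (hip : inner_product ip) z : ip 0 z = 0.
Proof.
case: hip => lin _ _ _.
have := lin 1 0 0 z; rewrite scaler0 addr0 mul1r.
by move/(congr1 (fun t => t - ip 0 z)); rewrite addrK subrr.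
Qed.

Lemma ipDl (R : realType) (V : lmodType R[i]) (ip : V -> V -> R[i])
  (hip : inner_product ip) x y z : ip (x + y) z = ip x z + ip y z.
Proof. by case: hip => lin _ _ _; rewrite -{1}[x]scale1r lin mul1r. Qed.

Lemma ipZl (R : realType) (V : lmodType R[i]) (ip : V -> V -> R[i])
  (hip : inner_product ip) a x z : ip (a *: x) z = a * ip x z.
Proof.
have := hip; case=> lin _ _ _; by rewrite -[a *: x]addr0 lin ip0l // addr0.
Qed.

Lemma ipNl (R : realType) (V : lmodType R[i]) (ip : V -> V -> R[i])
  (hip : inner_product ip) x z : ip (- x) z = - ip x z.
Proof. by rewrite -scaleN1r ipZl // mulN1r. Qed.

Lemma ipDr (R : realType) (V : lmodType R[i]) (ip : V -> V -> R[i])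
  (hip : inner_product ip) x y z : ip z (x + y) = ip z x + ip z y.
Proof.
have := hip; case=> _ sym _ _.
by rewrite (sym x z) (sym y z) sym ipDl // rmorphD.
Qed.

Lemma ipZr (R : realType) (V : lmodType R[i]) (ip : V -> V -> R[i])
  (hip : inner_product ip) a x z : ip z (a *: x) = a^* * ip z x.
Proof.
have := hip; case=> _ sym _ _.
by rewrite (sym x z) sym ipZl // rmorphM.
Qed.

Lemma ipNr (R : realType) (V : lmodType R[i]) (ip : V -> V -> R[i])
  (hip : inner_product ip) x z : ip z (- x) = - ip z x.
Proof. by rewrite -scaleN1r ipZr // rmorphN1 mulN1r. Qed.

Lemma ip_self (R : realType) (V : lmodType R[i]) (ip : V -> V -> R[i])
  (hip : inner_product ip) x : ip x x = (complex.Re (ip x x))%:C%C.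
Proof.
have := hip; case=> _ _ pos _.
have := pos x; case: (ip x x) => a b; rewrite lecE /= => /andP [/eqP hb _]. rewrite hb. exact: complexr0.
Qed.

Lemma q_ge0 (R : realType) (V : lmodType R[i]) (ip : V -> V -> R[i])
  (hip : inner_product ip) x : 0 <= complex.Re (ip x x).
Proof.
have := hip; case=> _ _ pos _.
by have := pos x; rewrite lecE => /andP [_ ].
Qed.

Lemma q_eq0 (R : realType) (V : lmodType R[i]) (ip : V -> V -> R[i])
  (hip : inner_product ip) x : complex.Re (ip x x) = 0 -> x = 0.
Proof.
have := hip; case=> _ _ _ def => h; apply: def.
by rewrite ip_self // h.
Qed.

Lemma ReJ (R : realType) (z : R[i]) : complex.Re (z^*) = complex.Re z.
Proof. by case: z. Qed.
Lemma ImJ (R : realType) (z : R[i]) : complex.Im (z^*) = - complex.Im z.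
Proof. by case: z. Qed.
Lemma ReM (R : realType) (x y : R[i]) : complex.Re (x * y) = complex.Re x * complex.Re y - complex.Im x * complex.Im y.
Proof. case: x => a b; case: y => c d. simpc. rewrite /=. reflexivity. Qed.
Lemma ImM (R : realType) (x y : R[i]) : complex.Im (x * y) = complex.Re x * complex.Im y + complex.Im x * complex.Re y.
Proof. case: x => a b; case: y => c d. simpc. rewrite /=. reflexivity. Qed.
Lemma ReC (R : realType) (r : R) : complex.Re (r%:C%C) = r.
Proof. reflexivity. Qed.
Lemma ImC (R : realType) (r : R) : complex.Im (r%:C%C) = 0.
Proof. reflexivity. Qed.
Lemma ReD (R : realType) (x y : R[i]) : complex.Re (x + y) = complex.Re x + complex.Re y.
Proof. case: x => a b; case: y => c d. simpc. rewrite /=. reflexivity. Qed.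

Lemma qD (R : realType) (V : lmodType R[i]) (ip : V -> V -> R[i])
  (hip : inner_product ip) x y :
  complex.Re (ip (x + y) (x + y)) = complex.Re (ip x x) + 2 * complex.Re (ip x y) + complex.Re (ip y y).
Proof.
have := hip; case=> _ sym _ _.
rewrite (ipDl hip) !(ipDr hip) (sym y x) !ReD ReJ.
set a := complex.Re _; set b := complex.Re _; set c := complex.Re _. ring.
Qed.

Lemma qZ (R : realType) (V : lmodType R[i]) (ip : V -> V -> R[i])
  (hip : inner_product ip) a x :
  complex.Re (ip (a *: x) (a *: x)) = (complex.Re a ^+ 2 + complex.Im a ^+ 2) * complex.Re (ip x x).
Proof.
rewrite (ipZl hip) (ipZr hip) (ip_self hip x) !ReM !ImM ReJ ImJ ReC ImC.
set r := complex.Re (ip x x). set a1 := complex.Re a. set a2 := complex.Im a. ring.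
Qed.

Lemma sqrt_le (R : realType) (a b : R) : 0 <= b -> a <= b ^+ 2 -> Num.sqrt a <= b.
Proof.
move=> b0 ab. have := ler_wsqrtr ab. rewrite sqrtr_sqr ger0_norm //.
Qed.

Lemma ip0r (R : realType) (V : lmodType R[i]) (ip : V -> V -> R[i])
  (hip : inner_product ip) z : ip z 0 = 0.
Proof. rewrite -(scale0r 0) (ipZr hip) rmorph0 mul0r. reflexivity. Qed.

Lemma ReZr (R : realType) (V : lmodType R[i]) (ip : V -> V -> R[i])
  (hip : inner_product ip) (t : R) x z :
  complex.Re (ip z (t%:C%C *: x)) = t * complex.Re (ip z x).
Proof. rewrite (ipZr hip) ReM ReJ ImJ ReC ImC. ring. Qed.

Lemma Re0 (R : realType) : complex.Re (0 : R[i]) = 0.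
Proof. reflexivity. Qed.

Lemma CS (R : realType) (V : lmodType R[i]) (ip : V -> V -> R[i])
  (hip : inner_product ip) x y :
  complex.Re (ip x y) ^+ 2 <= complex.Re (ip x x) * complex.Re (ip y y).
Proof.
have qx := q_ge0 hip x; have qy := q_ge0 hip y.
have [Q0|Qpos] := eqVneq (complex.Re (ip y y)) 0.
  have -> := q_eq0 hip Q0. rewrite (ip0r hip) (ip0l hip) Re0 mulr0 expr0n /=. exact: lexx.
have Qp : 0 < complex.Re (ip y y) by rewrite lt0r Qpos qy.
set t := - complex.Re (ip x y) / complex.Re (ip y y).
have := q_ge0 hip (x + t%:C%C *: y).
rewrite (qD hip) ReZr // qZ // ReC ImC.
have ht : t * complex.Re (ip y y) = - complex.Re (ip x y).
  rewrite /t mulrAC -mulrA divff ?mulr1 //. 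
move: ht; set B := complex.Re (ip x y); set Q := complex.Re (ip y y); set P := complex.Re (ip x x).
move=> ht h. nra.
Qed.

Lemma ipnorm_ge0 (R : realType) (V : lmodType R[i]) (ip : V -> V -> R[i]) x :
  0 <= ipnorm ip x.
Proof. exact: sqrtr_ge0. Qed.

Lemma ipnorm_sq (R : realType) (V : lmodType R[i]) (ip : V -> V -> R[i])
  (hip : inner_product ip) x : ipnorm ip x ^+ 2 = complex.Re (ip x x).
Proof. exact: sqr_sqrtr (q_ge0 hip x). Qed.

Lemma ipnormD (R : realType) (V : lmodType R[i]) (ip : V -> V -> R[i])
  (hip : inner_product ip) x y : ipnorm ip (x + y) <= ipnorm ip x + ipnorm ip y.
Proof.
apply: sqrt_le; first by rewrite addr_ge0 // ipnorm_ge0.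
rewrite (qD hip) -(ipnorm_sq hip x) -(ipnorm_sq hip y).
have := CS hip x y. rewrite -(ipnorm_sq hip x) -(ipnorm_sq hip y).
have := ipnorm_ge0 ip x; have := ipnorm_ge0 ip y.
set a := ipnorm ip x; set b := ipnorm ip y; set B := complex.Re _.
move=> b0 a0 h.
have hab : 0 <= a * b by rewrite mulr_ge0.
have hB : B <= a * b.
  rewrite leNgt; apply/negP => hB.
  have : 0 < (B - a * b) * (B + a * b).
    apply: mulr_gt0; first by rewrite subr_gt0.
    move: hB hab; set ab := a * b; move=> hB hab; lra.
  move: h. rewrite !expr2. nra.
nra.
Qed.

Lemma ipnormZ (R : realType) (V : lmodType R[i]) (ip : V -> V -> R[i])
  (hip : inner_product ip) a x :
  ipnorm ip (a *: x) = Num.sqrt (complex.Re a ^+ 2 + complex.Im a ^+ 2) * ipnorm ip x.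
Proof. rewrite /ipnorm (qZ hip) sqrtrM //. by rewrite addr_ge0 // sqr_ge0. Qed.

Lemma ipnormZr (R : realType) (V : lmodType R[i]) (ip : V -> V -> R[i])
  (hip : inner_product ip) (r : R) x :
  ipnorm ip (r%:C%C *: x) = `|r| * ipnorm ip x.
Proof. rewrite (ipnormZ hip) ReC ImC expr0n /= addr0 sqrtr_sqr. reflexivity. Qed.

Lemma ipnormN (R : realType) (V : lmodType R[i]) (ip : V -> V -> R[i])
  (hip : inner_product ip) x : ipnorm ip (- x) = ipnorm ip x.
Proof.
have -> : - x = (-1)%:C%C *: x by rewrite rmorphN1 scaleN1r.
rewrite (ipnormZr hip) normrN1 mul1r. reflexivity.
Qed.

Lemma ipnorm0 (R : realType) (V : lmodType R[i]) (ip : V -> V -> R[i])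
  (hip : inner_product ip) : ipnorm ip 0 = 0.
Proof. rewrite /ipnorm ip0r // . exact: sqrtr0. Qed.

Lemma ipnorm_eq0 (R : realType) (V : lmodType R[i]) (ip : V -> V -> R[i])
  (hip : inner_product ip) x : ipnorm ip x = 0 -> x = 0.
Proof.
move=> h; apply: (q_eq0 hip). rewrite -(ipnorm_sq hip) h expr0n. reflexivity.
Qed.

Lemma ipnormB_sym (R : realType) (V : lmodType R[i]) (ip : V -> V -> R[i])
  (hip : inner_product ip) x y : ipnorm ip (x - y) = ipnorm ip (y - x).
Proof. by rewrite -(ipnormN hip) opprB. Qed.

Lemma le_eps (R : realType) (x y : R) : (forall e, 0 < e -> x <= y + e) -> x <= y.
Proof.
move=> H; rewrite leNgt; apply/negP => h.
have e0 : 0 < (x - y) / 2 by rewrite divr_gt0 // subr_gt0.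
have := H _ e0. lra.
Qed.

Definition cvg_to (R : realType) (V : lmodType R[i]) (ip : V -> V -> R[i])
  (u : nat -> V) (l : V) :=
  forall e : R, 0 < e -> exists N, forall n, (N <= n)%N -> ipnorm ip (u n - l) < e.

Lemma cvg_unique (R : realType) (V : lmodType R[i]) (ip : V -> V -> R[i])
  (hip : inner_product ip) u l1 l2 : cvg_to ip u l1 -> cvg_to ip u l2 -> l1 = l2.
Proof.
move=> h1 h2.
suff : ipnorm ip (l1 - l2) = 0 by move/(ipnorm_eq0 hip)/eqP; rewrite subr_eq0 => /eqP.
apply/eqP; rewrite eq_le ipnorm_ge0 andbT; apply: le_eps => e e0.
have e2 : 0 < e / 2 by rewrite divr_gt0.
have [N1 H1] := h1 _ e2; have [N2 H2] := h2 _ e2.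
set M := maxn N1 N2.
have a := H1 M (leq_maxl _ _); have b := H2 M (leq_maxr _ _).
have := ipnormD hip (l1 - u M) (u M - l2).
rewrite addrA subrK (ipnormB_sym hip l1 (u M)). move: a b.
set p := ipnorm ip _; set q := ipnorm ip _; set r := ipnorm ip _. lra.
Qed.

Lemma cvg_lip (R : realType) (V W : lmodType R[i]) (ipV : V -> V -> R[i])
  (ipW : W -> W -> R[i]) (u : nat -> V) l (f : nat -> W) m (c : R) :
  (forall n, ipnorm ipW (f n - m) <= c * ipnorm ipV (u n - l)) ->
  cvg_to ipV u l -> cvg_to ipW f m.
Proof.
move=> hf hu e e0.
have c1 : 0 < `|c| + 1 by rewrite ltr_pwDr // normr_ge0.
have [N HN] := hu (e / (`|c| + 1)) (divr_gt0 e0 c1).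
exists N => n /HN h. apply: (le_lt_trans (hf n)).
apply: (le_lt_trans (ler_wpM2r (ipnorm_ge0 _ _) (ler_norm c))).
have : `|c| * ipnorm ipV (u n - l) <= `|c| * (e / (`|c| + 1)).
  by rewrite ler_wpM2l ?normr_ge0 // ltW.
have : `|c| * (e / (`|c| + 1)) < e.
  by rewrite mulrA ltr_pdivrMr // mulrDr mulr1 mulrC ltrDl.
set a := _ * ipnorm _ _. set b := _ * (_ / _). lra.
Qed.

Lemma cvgD (R : realType) (V : lmodType R[i]) (ip : V -> V -> R[i])
  (hip : inner_product ip) u v a b :
  cvg_to ip u a -> cvg_to ip v b -> cvg_to ip (fun n => u n + v n) (a + b).
Proof.
move=> hu hv e e0.
have e2 : 0 < e / 2 by rewrite divr_gt0.
have [N1 H1] := hu _ e2; have [N2 H2] := hv _ e2.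
exists (maxn N1 N2) => n hn.
have a1 := H1 n (leq_trans (leq_maxl _ _) hn); have b1 := H2 n (leq_trans (leq_maxr _ _) hn).
have := ipnormD hip (u n - a) (v n - b).
have -> : u n - a + (v n - b) = u n + v n - (a + b) by rewrite opprD addrACA.
move: a1 b1; set p := ipnorm ip _; set q := ipnorm ip _; set r := ipnorm ip _. lra.
Qed.

Lemma cvgZ (R : realType) (V : lmodType R[i]) (ip : V -> V -> R[i])
  (hip : inner_product ip) u a (c : R[i]) :
  cvg_to ip u a -> cvg_to ip (fun n => c *: u n) (c *: a).
Proof.
apply: (cvg_lip (c := Num.sqrt (complex.Re c ^+ 2 + complex.Im c ^+ 2))) => n.
by rewrite -scalerBr (ipnormZ hip).
Qed.

Lemma cvg_shift (R : realType) (V : lmodType R[i]) (ip : V -> V -> R[i]) u a :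
  cvg_to ip (fun n => u n.+1) a -> cvg_to ip u a.
Proof.
move=> h e e0; have [N HN] := h e e0; exists N.+1 => n; case: n => // n hn; exact: HN.
Qed.

Lemma cvg_shiftr (R : realType) (V : lmodType R[i]) (ip : V -> V -> R[i]) u a :
  cvg_to ip u a -> cvg_to ip (fun n => u n.+1) a.
Proof.
move=> h e e0; have [N HN] := h e e0; exists N => n hn. exact: HN (leqW hn).
Qed.

Lemma cvg_bound (R : realType) (V : lmodType R[i]) (ip : V -> V -> R[i])
  (hip : inner_product ip) u a (B : R) :
  cvg_to ip u a -> (forall n, ipnorm ip (u n) <= B) -> ipnorm ip a <= B.
Proof.
move=> h hB; apply: le_eps => e e0.
have [N HN] := h e e0. have := HN N (leqnn N).
have := ipnormD hip (u N) (a - u N). rewrite addrC subrK (ipnormB_sym hip).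
have := hB N. set p := ipnorm ip _; set q := ipnorm ip _; set r := ipnorm ip _. lra.
Qed.

Definition ps (R : realType) (H : lmodType R[i]) (ip : H -> H -> R[i]) (x : nat -> H) N :=
  \sum_(n < N) ipnorm ip (x n) ^+ 2.

Lemma ps_ge0 (R : realType) (H : lmodType R[i]) (ip : H -> H -> R[i]) x N : 0 <= ps ip x N.
Proof. apply: sumr_ge0 => i _; exact: sqr_ge0. Qed.

Lemma psS (R : realType) (H : lmodType R[i]) (ip : H -> H -> R[i]) x N :
  ps ip x N.+1 = ps ip x N + ipnorm ip (x N) ^+ 2.
Proof. by rewrite /ps big_ord_recr. Qed.

Lemma ps_mono (R : realType) (H : lmodType R[i]) (ip : H -> H -> R[i]) x N M :
  (N <= M)%N -> ps ip x N <= ps ip x M.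
Proof.
move/subnK => <-; elim: (M - N)%N => [|k IH]; first by rewrite add0n.
rewrite addSn psS; apply: (le_trans IH); rewrite lerDl; exact: sqr_ge0.
Qed.

Lemma l2_has_sup (R : realType) (H : lmodType R[i]) (ip : H -> H -> R[i]) x :
  l2_mem ip x -> has_sup [set r : R | exists N, r = \sum_(n < N) ipnorm ip (x n) ^+ 2]%classic.
Proof.
move=> [B hB]; split; first by exists 0, 0%N; rewrite big_ord0.
by exists B => r [N ->]; exact: hB.
Qed.

Lemma ps_le_sq (R : realType) (H : lmodType R[i]) (ip : H -> H -> R[i]) x N :
  l2_mem ip x -> ps ip x N <= l2_sqnorm ip x.
Proof. move=> hx; apply: (sup_upper_bound (l2_has_sup hx)). by exists N. Qed.

Lemma sq_le (R : realType) (H : lmodType R[i]) (ip : H -> H -> R[i]) x (B : R) :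
  (forall N, ps ip x N <= B) -> l2_mem ip x /\ l2_sqnorm ip x <= B.
Proof.
move=> hB; split; first by exists B.
apply: ge_sup; first by exists 0, 0%N; rewrite big_ord0.
by move=> r [N ->]; exact: hB.
Qed.

Lemma l2_sqnorm_ge0 (R : realType) (H : lmodType R[i]) (ip : H -> H -> R[i]) x :
  l2_mem ip x -> 0 <= l2_sqnorm ip x.
Proof. move=> hx; exact: (le_trans (ps_ge0 ip x 0) (ps_le_sq 0 hx)). Qed.

Lemma l2_approx (R : realType) (H : lmodType R[i]) (ip : H -> H -> R[i]) x :
  l2_mem ip x -> forall e : R, 0 < e -> exists N, forall M, (N <= M)%N ->
    l2_sqnorm ip x - ps ip x M < e.
Proof.
move=> hx e e0; have [r [N ->] hr] := sup_adherent e0 (l2_has_sup hx).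
exists N => M hM; have := ps_mono ip x hM. rewrite /l2_sqnorm. move: hr.
rewrite -/(ps ip x N). set s := sup _. set a := ps ip x N. set b := ps ip x M. lra.
Qed.

Lemma ps_dom (R : realType) (H : lmodType R[i]) (ip : H -> H -> R[i]) x y (C : R) :
  0 <= C -> (forall n, ipnorm ip (y n) <= C * ipnorm ip (x n)) ->
  forall M, ps ip y M <= C ^+ 2 * ps ip x M.
Proof.
move=> C0 h; elim=> [|M IH]; first by rewrite /ps !big_ord0 mulr0.
rewrite !psS mulrDr; apply: lerD => //.
by rewrite -exprMn !expr2; apply: ler_pM; rewrite ?ipnorm_ge0.
Qed.

Lemma psSl (R : realType) (H : lmodType R[i]) (ip : H -> H -> R[i]) y M :
  ps ip y M.+1 = ipnorm ip (y 0%N) ^+ 2 + ps ip (fun n => y n.+1) M.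
Proof. rewrite /ps big_ord_recl /=. congr (_ + _). Qed.

Lemma ps_dom_shift (R : realType) (H : lmodType R[i]) (ip : H -> H -> R[i]) x y (C : R) :
  0 <= C -> ipnorm ip (y 0%N) = 0 -> (forall n, ipnorm ip (y n.+1) <= C * ipnorm ip (x n)) ->
  forall M, ps ip y M <= C ^+ 2 * ps ip x M.
Proof.
move=> C0 y0 h [|M]; first by rewrite /ps !big_ord0 mulr0.
rewrite psSl y0 expr0n add0r. apply: (le_trans (ps_dom C0 h M)).
by rewrite ler_wpM2l ?sqr_ge0 // ps_mono.
Qed.

Definition islin (R : realType) (U V : lmodType R[i]) (PU : U -> Prop) (A : U -> V) :=
  forall (a : R[i]) u w, PU u -> PU w -> A (a *: u + w) = a *: A u + A w.

Lemma lin0 (R : realType) (U V : lmodType R[i]) (PU : U -> Prop) (A : U -> V) :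
  islin PU A -> PU 0 -> A 0 = 0.
Proof.
move=> h p0; have := h 1 0 0 p0 p0; rewrite scaler0 addr0 scale1r.
by move/(congr1 (fun t => t - A 0)); rewrite addrK subrr.
Qed.

Lemma linD (R : realType) (U V : lmodType R[i]) (PU : U -> Prop) (A : U -> V) u w :
  islin PU A -> PU u -> PU w -> A (u + w) = A u + A w.
Proof. move=> h pu pw; by rewrite -(scale1r u) h // !scale1r. Qed.

Lemma linB (R : realType) (U V : lmodType R[i]) (PU : U -> Prop) (A : U -> V) u w :
  islin PU A -> PU u -> PU w -> A (u - w) = A u - A w.
Proof. move=> h pu pw; by rewrite addrC -scaleN1r h // scaleN1r addrC. Qed.

Lemma linZ (R : realType) (U V : lmodType R[i]) (PU : U -> Prop) (A : U -> V) a u :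
  islin PU A -> PU 0 -> PU u -> A (a *: u) = a *: A u.
Proof. move=> h p0 pu; by rewrite -[a *: u]addr0 h // (lin0 h p0) addr0. Qed.

Lemma lin_sum (R : realType) (U V : lmodType R[i]) (PU : U -> Prop) (A : U -> V) N (F : nat -> U) :
  islin PU A -> PU 0 -> (forall u w, PU u -> PU w -> PU (u + w)) -> (forall n, PU (F n)) ->
  A (\sum_(n < N) F n) = \sum_(n < N) A (F n).
Proof.
move=> h p0 pD pF.
have P : forall M, PU (\sum_(n < M) F n).
  by elim=> [|M IH]; rewrite ?big_ord0 // big_ord_recr /=; apply: pD.
elim: N => [|N IH]; first by rewrite !big_ord0 (lin0 h p0).
rewrite !big_ord_recr /= (linD h) //; last exact: P.
congr (_ + _); exact: IH.
Qed.

Lemma ps0 (R : realType) (H : lmodType R[i]) (ip : H -> H -> R[i]) (hip : inner_product ip) N :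
  ps ip (0 : nat -> H) N = 0.
Proof.
rewrite /ps big1 // => i _. rewrite (_ : (0 : nat -> H) i = 0) //.
by rewrite (ipnorm0 hip) expr0n.
Qed.

Lemma l2_0 (R : realType) (H : lmodType R[i]) (ip : H -> H -> R[i]) (hip : inner_product ip) :
  l2_mem ip (0 : nat -> H) /\ l2_sqnorm ip (0 : nat -> H) = 0.
Proof.
have hb : forall N, ps ip (0 : nat -> H) N <= 0 by move=> N; rewrite (ps0 hip N).
have [h1 h2] := sq_le hb.
split => //; apply/eqP; rewrite eq_le h2 l2_sqnorm_ge0 //.
Qed.

Lemma l2_lin (R : realType) (H : lmodType R[i]) (ip : H -> H -> R[i]) (hip : inner_product ip)
  (a : R[i]) (u v : nat -> H) : l2_mem ip u -> l2_mem ip v -> l2_mem ip (a *: u + v).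
Proof.
move=> hu hv; set c := Num.sqrt (complex.Re a ^+ 2 + complex.Im a ^+ 2).
have c0 : 0 <= c by exact: sqrtr_ge0.
exists (2 * c ^+ 2 * l2_sqnorm ip u + 2 * l2_sqnorm ip v) => N.
apply: (@le_trans _ _ (2 * c ^+ 2 * ps ip u N + 2 * ps ip v N)).
  rewrite /ps mulr_sumr mulr_sumr -big_split /=. apply: ler_sum => n _.
  have := ipnormD hip (a *: u n) (v n). rewrite (ipnormZ hip) -/c.
  have := ipnorm_ge0 ip (a *: u n + v n).
  have := ipnorm_ge0 ip (u n); have := ipnorm_ge0 ip (v n).
  rewrite (_ : (a *: u + v) n = a *: u n + v n) //.
  set p := ipnorm ip (a *: u n + v n); set q := ipnorm ip (u n); set r := ipnorm ip (v n).
  move=> r0 q0 p0 hp.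
  have : p ^+ 2 <= (c * q + r) ^+ 2 by rewrite !expr2; apply: ler_pM.
  have := sqr_ge0 (c * q - r). clearbody c p q r. nra.
have := ps_le_sq N hu; have := ps_le_sq N hv; have := sqr_ge0 c.
set A := ps ip u N; set B := ps ip v N; set C := c ^+ 2. nra.
Qed.

Definition en (R : realType) (H : lmodType R[i]) (n : nat) (h : H) : nat -> H :=
  fun m => if m == n then h else 0.
Definition trunc (R : realType) (H : lmodType R[i]) (N : nat) (x : nat -> H) : nat -> H :=
  fun m => if (m < N)%N then x m else 0.
Definition tail (R : realType) (H : lmodType R[i]) (N : nat) (x : nat -> H) : nat -> H :=
  fun m => if (m < N)%N then 0 else x m.

Lemma fin_l2 (R : realType) (H : lmodType R[i]) (ip : H -> H -> R[i]) (hip : inner_product ip)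
  (x : nat -> H) N : (forall m, (N <= m)%N -> x m = 0) -> l2_mem ip x.
Proof.
move=> hx; exists (ps ip x N) => M; change (ps ip x M <= ps ip x N).
elim: M => [|M IH]; first exact: (ps_mono ip x (leq0n N)).
have [lt|ge] := ltnP M N; first exact: ps_mono.
by rewrite psS hx // (ipnorm0 hip) expr0n addr0.
Qed.

Lemma en_l2 (R : realType) (H : lmodType R[i]) (ip : H -> H -> R[i]) (hip : inner_product ip)
  n (h : H) : l2_mem ip (en n h).
Proof.
apply: (fin_l2 hip (N := n.+1)) => m hm; rewrite /en.
by case: eqP => // e; move: hm; rewrite e ltnn.
Qed.

Lemma trunc_l2 (R : realType) (H : lmodType R[i]) (ip : H -> H -> R[i]) (hip : inner_product ip)
  N (x : nat -> H) : l2_mem ip (trunc N x).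
Proof. apply: (fin_l2 hip (N := N)) => m hm; by rewrite /trunc ltnNge hm. Qed.

Lemma truncS (R : realType) (H : lmodType R[i]) N (x : nat -> H) :
  trunc N.+1 x = trunc N x + en N (x N).
Proof.
apply: funext => m; change (trunc N.+1 x m = trunc N x m + en N (x N) m).
rewrite /trunc /en ltnS leq_eqVlt.
case: eqP => [->|_] /=; first by rewrite ltnn add0r.
by case: (m < N)%N; rewrite addr0.
Qed.

Lemma trunc0 (R : realType) (H : lmodType R[i]) (x : nat -> H) : trunc 0 x = 0.
Proof. by apply: funext => m. Qed.

Lemma trunc_tail (R : realType) (H : lmodType R[i]) N (x : nat -> H) :
  x = trunc N x + tail N x.
Proof.
apply: funext => m; change (x m = trunc N x m + tail N x m).
by rewrite /trunc /tail; case: (m < N)%N; rewrite ?addr0 ?add0r.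
Qed.

Lemma tail_l2 (R : realType) (H : lmodType R[i]) (ip : H -> H -> R[i]) (hip : inner_product ip)
  N (x : nat -> H) : l2_mem ip x -> l2_mem ip (tail N x).
Proof.
move=> hx; exists (l2_sqnorm ip x) => M; change (ps ip (tail N x) M <= l2_sqnorm ip x).
apply: (le_trans _ (ps_le_sq M hx)).
have h := @ps_dom _ _ ip x (tail N x) 1 ler01.
apply: (le_trans (h _ M)); first move=> n; rewrite ?expr1n ?mul1r // /tail.
case: (n < N)%N; rewrite ?(ipnorm0 hip) ?ipnorm_ge0 //.
Qed.

Lemma ps_tail (R : realType) (H : lmodType R[i]) (ip : H -> H -> R[i]) (hip : inner_product ip)
  N (x : nat -> H) M : l2_mem ip x -> ps ip (tail N x) M <= l2_sqnorm ip x - ps ip x N.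
Proof.
move=> hx.
have le0 : forall M, (M <= N)%N -> ps ip (tail N x) M = 0.
  elim=> [|k IH] hk; first by rewrite /ps big_ord0.
  rewrite psS IH ?(ltnW hk) // /tail hk (ipnorm0 hip) expr0n addr0. reflexivity.
have [le|ge] := leqP M N.
  by rewrite le0 // subr_ge0 ps_le_sq.
have eqk : forall k, ps ip (tail N x) (N + k) = ps ip x (N + k) - ps ip x N.
  elim=> [|k IH]; first by rewrite addn0 le0 // subrr.
  rewrite addnS !psS IH /tail ltnNge leq_addr /=. 
  rewrite addrAC. reflexivity.
rewrite -(subnKC (ltnW ge)) eqk lerB // ps_le_sq //.
Qed.

Lemma beta_pos (R : realType) (w : nat -> R) n : (forall k, 0 < w k) -> 0 < beta w n.
Proof. move=> wp; apply: prodr_gt0 => k _; exact: wp. Qed.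

Lemma betaS (R : realType) (w : nat -> R) n : beta w n.+1 = beta w n * w n.
Proof. by rewrite /beta big_ord_recr. Qed.

Lemma beta0 (R : realType) (w : nat -> R) : beta w 0 = 1.
Proof. by rewrite /beta big_ord0. Qed.

Fixpoint ew (R : realType) (w : nat -> R) (n : nat) : R :=
  if n is n'.+1 then Num.max 1 (w n' * ew w n') else 1.

Lemma ewS (R : realType) (w : nat -> R) n : ew w n.+1 = Num.max 1 (w n * ew w n).
Proof. reflexivity. Qed.

Lemma ew_ge1 (R : realType) (w : nat -> R) n : 1 <= ew w n.
Proof. case: n => [|n] /=; first exact: lexx. by rewrite le_max lexx. Qed.

Lemma ew_step (R : realType) (w : nat -> R) n : w n * ew w n <= ew w n.+1.
Proof. by rewrite /= le_max lexx orbT. Qed.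

Lemma ew_repr (R : realType) (w : nat -> R) n : (forall k, 0 < w k) ->
  exists m, (m <= n)%N /\ ew w n = beta w n / beta w m.
Proof.
move=> wp; elim: n => [|n [m [hm IH]]].
  by exists 0%N; split => //; rewrite beta0 divr1.
have [h|h] := leP 1 (w n * ew w n).
- have -> : ew w n.+1 = w n * ew w n.
    by apply/eqP; rewrite eq_le ew_step andbT ewS ge_max h lexx.
  exists m; split; first exact: leqW.
  rewrite IH betaS mulrA [w n * _]mulrC. reflexivity.
- have -> : ew w n.+1 = 1.
    by apply/eqP; rewrite eq_le ew_ge1 andbT ewS ge_max (ltW h) lexx.
  exists n.+1; split => //.
  by rewrite divff // gt_eqF // beta_pos.
Qed.

Lemma ew_le (R : realType) (w : nat -> R) (M : R) n : (forall k, 0 < w k) ->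
  (forall n k : nat, beta w (n + k) / beta w n <= M) -> ew w n <= M.
Proof.
move=> wp hM; have [m [hm ->]] := ew_repr n wp.
by rewrite -(subnKC hm) hM.
Qed.

Lemma ew_pos (R : realType) (w : nat -> R) n : 0 < ew w n.
Proof. exact: (lt_le_trans ltr01 (ew_ge1 w n)). Qed.

Lemma w_le (R : realType) (w : nat -> R) (M : R) n : (forall k, 0 < w k) ->
  (forall n k : nat, beta w (n + k) / beta w n <= M) -> w n <= M.
Proof.
move=> wp hM; have := hM n 1%N; rewrite addn1 betaS mulrC mulrA mulVf ?mul1r //.
by rewrite gt_eqF // beta_pos.
Qed.

Definition Zf (R : realType) (K H : lmodType R[i]) (T : K -> K) (X : (nat -> H) -> K)
  (w : nat -> R) (n : nat) (h : H) : K := (iter n (RX T X w) (embH0 K h)).1.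

Definition Pf (R : realType) (K H : lmodType R[i]) (T : K -> K) (X : (nat -> H) -> K)
  (w : nat -> R) (N : nat) (x : nat -> H) : K :=
  \sum_(n < N) ((beta w n)^-1)%:C%C *: Zf T X w n (x n).

Lemma iter_snd_RX (R : realType) (K H : lmodType R[i]) (T : K -> K) (X : (nat -> H) -> K)
  (w : nat -> R) n v : (iter n (RX T X w) v).2 = iter n (wshift w) v.2.
Proof. by elim: n => //= n ->. Qed.

Lemma iter_snd_R0 (R : realType) (K H : lmodType R[i]) (T : K -> K)
  (w : nat -> R) n (v : K * (nat -> H)) : (iter n (R0 T w) v).2 = iter n (wshift w) v.2.
Proof. by elim: n => //= n ->. Qed.

Lemma iter_fst_R0 (R : realType) (K H : lmodType R[i]) (T : K -> K)
  (w : nat -> R) n (y : nat -> H) : T 0 = 0 -> (iter n (R0 T w) (0, y)).1 = 0.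
Proof. by move=> T0; elim: n => //= n ->. Qed.

Lemma en_lin (R : realType) (H : lmodType R[i]) n (a : R[i]) (h1 h2 : H) :
  en n (a *: h1 + h2) = a *: en n h1 + en n h2.
Proof.
apply: funext => m; change (en n (a *: h1 + h2) m = a *: en n h1 m + en n h2 m).
by rewrite /en; case: (m == n); rewrite ?scaler0 ?addr0.
Qed.

Lemma iter_shift_en (R : realType) (H : lmodType R[i]) (w : nat -> R) n (h : H) :
  iter n (wshift w) (en 0 h) = ((beta w n)%:C)%C *: en n h.
Proof.
elim: n => [|n IH] /=; first by rewrite beta0 scale1r.
rewrite IH; apply: funext => m; rewrite /wshift.
change ((if m is n'.+1 then ((w n')%:C)%C *: (((beta w n)%:C)%C *: en n h n') else 0)
   = ((beta w n.+1)%:C)%C *: en n.+1 h m).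
case: m => [|m]; first by rewrite /en /= scaler0.
rewrite /en eqSS; case: eqP => [->|_]; last by rewrite !scaler0.
rewrite scalerA -rmorphM betaS mulrC. reflexivity.
Qed.

Lemma Zf0 (R : realType) (K H : lmodType R[i]) (T : K -> K) (X : (nat -> H) -> K)
  (w : nat -> R) (h : H) : Zf T X w 0 h = 0.
Proof. reflexivity. Qed.

Lemma ZfS (R : realType) (K H : lmodType R[i]) (ipH : H -> H -> R[i]) (hH : inner_product ipH)
  (T : K -> K) (X : (nat -> H) -> K) (w : nat -> R) (hX : islin (l2_mem ipH) X) n (h : H) :
  Zf T X w n.+1 h = T (Zf T X w n h) + ((beta w n)%:C)%C *: X (en n h).
Proof.
rewrite /Zf /= iter_snd_RX.
rewrite (_ : (embH0 K h).2 = en 0 h) // iter_shift_en (linZ _ hX) //.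
- exact: (l2_0 hH).1.
- exact: en_l2.
Qed.

Lemma Zf_lin (R : realType) (K H : lmodType R[i]) (ipH : H -> H -> R[i]) (hH : inner_product ipH)
  (T : K -> K) (X : (nat -> H) -> K) (w : nat -> R) (hT : islin (fun _ => True) T)
  (hX : islin (l2_mem ipH) X) n (a : R[i]) (h1 h2 : H) :
  Zf T X w n (a *: h1 + h2) = a *: Zf T X w n h1 + Zf T X w n h2.
Proof.
elim: n => [|n IH]; first by rewrite !Zf0 scaler0 addr0.
rewrite !(@ZfS _ _ _ _ hH T X w hX) IH hT // en_lin hX; try exact: (en_l2 hH).
rewrite !scalerDr !scalerA [a * _]mulrC -!addrA; congr (_ + _).
rewrite addrCA. reflexivity.
Qed.

Lemma fst_sum (R : realType) (K H : lmodType R[i]) N (F : 'I_N -> K * (nat -> H)) :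
  (\sum_(n < N) F n).1 = \sum_(n < N) (F n).1.
Proof. exact: (big_morph (fun p : K * (nat -> H) => p.1) (fun _ _ => erefl) erefl). Qed.

Lemma snd_sum (R : realType) (K H : lmodType R[i]) N (F : 'I_N -> K * (nat -> H)) :
  (\sum_(n < N) F n).2 = \sum_(n < N) (F n).2.
Proof. exact: (big_morph (fun p : K * (nat -> H) => p.2) (fun _ _ => erefl) erefl). Qed.

Lemma hypP (R : realType) (H : lmodType R[i]) (ipH : H -> H -> R[i]) (hH : inner_product ipH)
    (K : lmodType R[i]) (ipK : K -> K -> R[i]) (hK : inner_product ipK)
    (w : nat -> R) (T : K -> K) (X : (nat -> H) -> K) (T0 : T 0 = 0) (s : R)
    (hs : forall (N : nat) (x : nat -> H),
        sum_norm ipK ipH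
          (\sum_(n < N.+1) (((beta w n)^-1)%:C)%C *:
              (iter n (RX T X w) (embH0 K (x n)) - iter n (R0 T w) (embH0 K (x n))))
        <= s * Num.sqrt (\sum_(n < N.+1) ipnorm ipH (x n) ^+ 2))
    N x : ipnorm ipK (Pf T X w N x) <= `|s| * Num.sqrt (ps ipH x N).
Proof.
case: N => [|N].
  rewrite /Pf big_ord0 (ipnorm0 hK); apply: mulr_ge0; [exact: normr_ge0|exact: sqrtr_ge0].
have := hs N x.
set V := \sum_(n < N.+1) _.
have -> : V = (Pf T X w N.+1 x, 0).
  rewrite [V]surjective_pairing /V fst_sum snd_sum; congr pair.
    rewrite /Pf; apply: eq_bigr => n _ /=.
    rewrite (_ : embH0 K (x n) = (0, (embH0 K (x n)).2)) // iter_fst_R0 // subr0. reflexivity.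
  rewrite big1 // => n _ /=.
  rewrite iter_snd_RX iter_snd_R0 subrr scaler0. reflexivity.
rewrite /sum_norm /= (l2_0 hH).2 addr0 sqrtr_sqr ger0_norm ?ipnorm_ge0 // => h.
apply: (le_trans h); rewrite ler_wpM2r ?sqrtr_ge0 // ?ler_norm //.
Qed.

Lemma Zf_0h (R : realType) (K H : lmodType R[i]) (ipH : H -> H -> R[i]) (hH : inner_product ipH)
  (T : K -> K) (X : (nat -> H) -> K) (w : nat -> R) (hT : islin (fun _ => True) T)
  (hX : islin (l2_mem ipH) X) n : Zf T X w n 0 = 0.
Proof.
have := Zf_lin hH w hT hX n 1 0 0; rewrite scaler0 addr0 scale1r.
by move/(congr1 (fun t => t - Zf T X w n 0)); rewrite addrK subrr.
Qed.

Lemma Pf_split (R : realType) (K H : lmodType R[i]) (ipH : H -> H -> R[i]) (hH : inner_product ipH)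
  (T : K -> K) (X : (nat -> H) -> K) (w : nat -> R) (hT : islin (fun _ => True) T)
  (hX : islin (l2_mem ipH) X) n m x : (n <= m)%N ->
  Pf T X w m x = Pf T X w n x + Pf T X w m (tail n x).
Proof.
move/subnK => <-; elim: (m - n)%N => [|k IH].
  rewrite add0n [Pf _ _ _ n (tail n x)]/Pf big1 ?addr0 // => i _.
  rewrite /tail ltn_ord (Zf_0h hH w hT hX) scaler0. reflexivity.
rewrite addSn /Pf !big_ord_recr /= -!/(Pf _ _ _ _ _) IH -addrA; congr (_ + _).
by rewrite /tail ltnNge leq_addl.
Qed.

Lemma sqrt_small (R : realType) (s e : R) : 0 <= s -> 0 < e ->
  exists2 d : R, 0 < d & forall t, t < d -> s * Num.sqrt t < e.
Proof.
move=> s0 e0; have s1 : 0 < s + 1 by rewrite ltr_wpDl.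
have f0 : 0 < e / (s + 1) by rewrite divr_gt0.
exists ((e / (s + 1)) ^+ 2); first by rewrite exprn_gt0.
move=> t ht; have [t0|t0] := leP t 0.
  by rewrite ler0_sqrtr // mulr0.
have : Num.sqrt t < e / (s + 1).
  by rewrite -[X in _ < X](ger0_norm (ltW f0)) -sqrtr_sqr ltr_sqrt // exprn_gt0.
have := sqrtr_ge0 t.
have : e / (s + 1) * (s + 1) = e by rewrite divfK // gt_eqF.
set q := Num.sqrt t; set f := e / (s + 1). move=> hf q0 hq.
nra.
Qed.

Lemma tail_small (R : realType) (H : lmodType R[i]) (ipH : H -> H -> R[i]) (x : nat -> H) (s e : R) :
  l2_mem ipH x -> 0 <= s -> 0 < e ->
  exists N, forall n, (N <= n)%N -> s * Num.sqrt (l2_sqnorm ipH x - ps ipH x n) < e.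
Proof.
move=> hx s0 e0; have [d d0 hd] := sqrt_small s0 e0.
have [N HN] := l2_approx hx d0; exists N => n /HN; exact: hd.
Qed.

Lemma Pf_tail_bound (R : realType) (K H : lmodType R[i]) (ipH : H -> H -> R[i]) (hH : inner_product ipH)
  (ipK : K -> K -> R[i]) (hK : inner_product ipK)
  (T : K -> K) (X : (nat -> H) -> K) (w : nat -> R) (hT : islin (fun _ => True) T)
  (hX : islin (l2_mem ipH) X) (s : R) (s0 : 0 <= s)
  (hP : forall N x, ipnorm ipK (Pf T X w N x) <= s * Num.sqrt (ps ipH x N))
  x N m : l2_mem ipH x -> (N <= m)%N ->
  ipnorm ipK (Pf T X w m x - Pf T X w N x) <= s * Num.sqrt (l2_sqnorm ipH x - ps ipH x N).
Proof.
move=> hx hm; rewrite (Pf_split hH w hT hX x hm) addrAC subrr add0r.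
apply: (le_trans (hP _ _)); rewrite ler_wpM2l //; apply: ler_wsqrtr.
exact: ps_tail.
Qed.

Lemma Pf_cvg (R : realType) (K H : lmodType R[i]) (ipH : H -> H -> R[i]) (hH : inner_product ipH)
  (ipK : K -> K -> R[i]) (hK : hilbert_space ipK)
  (T : K -> K) (X : (nat -> H) -> K) (w : nat -> R) (hT : islin (fun _ => True) T)
  (hX : islin (l2_mem ipH) X) (s : R) (s0 : 0 <= s)
  (hP : forall N x, ipnorm ipK (Pf T X w N x) <= s * Num.sqrt (ps ipH x N))
  x : l2_mem ipH x -> exists l, cvg_to ipK (fun N => Pf T X w N x) l.
Proof.
move=> hx; have [hip hc] := hK; apply: hc => e e0.
have e2 : 0 < e / 2 by rewrite divr_gt0.
have [N HN] := tail_small hx s0 e2.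
exists N => m n hm hn.
have h1 := @Pf_tail_bound _ _ _ _ hH _ hip _ _ w hT hX _ s0 hP x N m hx hm.
have h2 := @Pf_tail_bound _ _ _ _ hH _ hip _ _ w hT hX _ s0 hP x N n hx hn.
have := ipnormD hip (Pf T X w m x - Pf T X w N x) (Pf T X w N x - Pf T X w n x).
rewrite addrA subrK (ipnormB_sym hip (Pf T X w N x)).
have := HN N (leqnn N). move: h1 h2.
set a := ipnorm ipK _; set b := ipnorm ipK _; set c := ipnorm ipK _; set d := s * _.
move=> h1 h2 h3 h4. lra.
Qed.

Definition Yop (R : realType) (K H : lmodType R[i]) (ipK : K -> K -> R[i])
  (T : K -> K) (X : (nat -> H) -> K) (w : nat -> R) (x : nat -> H) : K :=
  epsilon (inhabits 0) (cvg_to ipK (fun N => Pf T X w N x)).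

Lemma Yop_spec (R : realType) (K H : lmodType R[i]) (ipH : H -> H -> R[i]) (hH : inner_product ipH)
  (ipK : K -> K -> R[i]) (hK : hilbert_space ipK)
  (T : K -> K) (X : (nat -> H) -> K) (w : nat -> R) (hT : islin (fun _ => True) T)
  (hX : islin (l2_mem ipH) X) (s : R) (s0 : 0 <= s)
  (hP : forall N x, ipnorm ipK (Pf T X w N x) <= s * Num.sqrt (ps ipH x N))
  x : l2_mem ipH x -> cvg_to ipK (fun N => Pf T X w N x) (Yop ipK T X w x).
Proof.
move=> hx; rewrite /Yop; apply: epsilon_spec.
exact: (@Pf_cvg _ _ _ _ hH _ hK _ _ w hT hX _ s0 hP x hx).
Qed.

Lemma Pf_lin (R : realType) (K H : lmodType R[i]) (ipH : H -> H -> R[i]) (hH : inner_product ipH)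
  (T : K -> K) (X : (nat -> H) -> K) (w : nat -> R) (hT : islin (fun _ => True) T)
  (hX : islin (l2_mem ipH) X) N (a : R[i]) (u v : nat -> H) :
  Pf T X w N (a *: u + v) = a *: Pf T X w N u + Pf T X w N v.
Proof.
rewrite /Pf scaler_sumr -big_split /=; apply: eq_bigr => n _.
rewrite (_ : (a *: u + v) n = a *: u n + v n) // (@Zf_lin _ _ _ _ hH T X w hT hX).
by rewrite scalerDr !scalerA mulrC.
Qed.

Lemma Yop_lin (R : realType) (K H : lmodType R[i]) (ipH : H -> H -> R[i]) (hH : inner_product ipH)
  (ipK : K -> K -> R[i]) (hK : hilbert_space ipK)
  (T : K -> K) (X : (nat -> H) -> K) (w : nat -> R) (hT : islin (fun _ => True) T)
  (hX : islin (l2_mem ipH) X) (s : R) (s0 : 0 <= s)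
  (hP : forall N x, ipnorm ipK (Pf T X w N x) <= s * Num.sqrt (ps ipH x N)) :
  islin (l2_mem ipH) (Yop ipK T X w).
Proof.
move=> a u v hu hv.
have hip := hK.1.
have Yu := @Yop_spec _ _ _ _ hH _ hK _ _ w hT hX _ s0 hP u hu.
have Yv := @Yop_spec _ _ _ _ hH _ hK _ _ w hT hX _ s0 hP v hv.
have Yw := @Yop_spec _ _ _ _ hH _ hK _ _ w hT hX _ s0 hP _ (l2_lin hH a hu hv).
apply: (cvg_unique hip Yw).
have := cvgD hip (cvgZ hip a Yu) Yv.
rewrite /cvg_to => h e e0; have [N HN] := h e e0; exists N => n hn.
rewrite (@Pf_lin _ _ _ _ hH T X w hT hX). exact: HN.
Qed.

Lemma Yop_bound (R : realType) (K H : lmodType R[i]) (ipH : H -> H -> R[i]) (hH : inner_product ipH)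
  (ipK : K -> K -> R[i]) (hK : hilbert_space ipK)
  (T : K -> K) (X : (nat -> H) -> K) (w : nat -> R) (hT : islin (fun _ => True) T)
  (hX : islin (l2_mem ipH) X) (s : R) (s0 : 0 <= s)
  (hP : forall N x, ipnorm ipK (Pf T X w N x) <= s * Num.sqrt (ps ipH x N)) x :
  l2_mem ipH x -> ipnorm ipK (Yop ipK T X w x) <= s * l2_norm ipH x.
Proof.
move=> hx; apply: (cvg_bound hK.1 (@Yop_spec _ _ _ _ hH _ hK _ _ w hT hX _ s0 hP x hx)) => N.
apply: (le_trans (hP N x)); rewrite ler_wpM2l //; apply: ler_wsqrtr; exact: ps_le_sq.
Qed.

Lemma Pf_shift (R : realType) (K H : lmodType R[i]) (ipH : H -> H -> R[i]) (hH : inner_product ipH)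
  (T : K -> K) (X : (nat -> H) -> K) (w : nat -> R) (wp : forall k, 0 < w k)
  (hT : islin (fun _ => True) T)
  (hX : islin (l2_mem ipH) X) N (x : nat -> H) :
  Pf T X w N.+1 (wshift w x) = T (Pf T X w N x) + X (trunc N x).
Proof.
have X0 : X 0 = 0 by apply: (lin0 hX); exact: (l2_0 hH).1.
have T0 : T 0 = 0 by apply: (lin0 hT).
elim: N => [|N IH].
  rewrite /Pf big_ord_recr big_ord0 /= (@Zf_0h _ _ _ _ hH T X w hT hX) scaler0 add0r.
  rewrite big_ord0 T0 trunc0 X0 addr0. reflexivity.
rewrite [Pf _ _ _ N.+2 _]/Pf big_ord_recr /= -/(Pf T X w N.+1 (wshift w x)) IH.
rewrite /wshift.
have -> : Zf T X w N.+1 (((w N)%:C)%C *: x N) = ((w N)%:C)%C *: Zf T X w N.+1 (x N).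
  by rewrite -[_ *: x N]addr0 (@Zf_lin _ _ _ _ hH T X w hT hX) (@Zf_0h _ _ _ _ hH T X w hT hX) addr0.
rewrite (@ZfS _ _ _ _ hH T X w hX) scalerA -rmorphM.
have bN : beta w N != 0 by rewrite gt_eqF // beta_pos.
have -> : (beta w N.+1)^-1 * w N = (beta w N)^-1.
  by rewrite betaS invfM -mulrA mulVf ?mulr1 // gt_eqF.
rewrite scalerDr scalerA -rmorphM mulVf // scale1r.
rewrite /Pf big_ord_recr /= -/(Pf T X w N x) truncS.
rewrite (linD hT) // (linD hX (trunc_l2 hH N x) (en_l2 hH N (x N))).
rewrite (linZ _ hT) // addrACA. reflexivity.
Qed.

Lemma wshift_l2 (R : realType) (H : lmodType R[i]) (ipH : H -> H -> R[i]) (hH : inner_product ipH)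
  (w : nat -> R) (wp : forall k, 0 < w k) (M : R) (wM : forall k, w k <= M) x :
  l2_mem ipH x -> l2_mem ipH (wshift w x).
Proof.
move=> hx; have M0 : 0 <= M by exact: (le_trans (ltW (wp 0%N)) (wM 0%N)).
exists (M ^+ 2 * l2_sqnorm ipH x) => N.
change (ps ipH (wshift w x) N <= M ^+ 2 * l2_sqnorm ipH x).
have y0 : ipnorm ipH (wshift w x 0%N) = 0 by exact: (ipnorm0 hH).
have ys : forall n, ipnorm ipH (wshift w x n.+1) <= M * ipnorm ipH (x n).
  move=> n /=; rewrite (ipnormZr hH) ger0_norm; last exact: ltW (wp n).
  by rewrite ler_wpM2r ?ipnorm_ge0.
apply: (le_trans (@ps_dom_shift _ _ ipH x (wshift w x) M M0 y0 ys N)).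
by rewrite ler_wpM2l ?sqr_ge0 // ps_le_sq.
Qed.

Lemma Yop_shift (R : realType) (K H : lmodType R[i]) (ipH : H -> H -> R[i]) (hH : inner_product ipH)
  (ipK : K -> K -> R[i]) (hK : hilbert_space ipK)
  (T : K -> K) (X : (nat -> H) -> K) (w : nat -> R) (wp : forall k, 0 < w k)
  (M : R) (wM : forall k, w k <= M)
  (hT : islin (fun _ => True) T) (cT : R) (hcT : forall u, ipnorm ipK (T u) <= cT * ipnorm ipK u)
  (hX : islin (l2_mem ipH) X) (cX : R)
  (hcX : forall u, l2_mem ipH u -> ipnorm ipK (X u) <= cX * l2_norm ipH u)
  (s : R) (s0 : 0 <= s)
  (hP : forall N x, ipnorm ipK (Pf T X w N x) <= s * Num.sqrt (ps ipH x N)) x :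
  l2_mem ipH x -> Yop ipK T X w (wshift w x) = T (Yop ipK T X w x) + X x.
Proof.
move=> hx; have hip := hK.1.
have hSx := wshift_l2 hH wp wM hx.
have A := cvg_shiftr (@Yop_spec _ _ _ _ hH _ hK _ _ w hT hX _ s0 hP _ hSx).
have B : cvg_to ipK (fun N => T (Pf T X w N x)) (T (Yop ipK T X w x)).
  apply: (cvg_lip (c := cT) _ (@Yop_spec _ _ _ _ hH _ hK _ _ w hT hX _ s0 hP _ hx)) => n.
  by rewrite -(linB hT) //.
have C : cvg_to ipK (fun N => X (trunc N x)) (X x).
  move=> e e0; have [N HN] := tail_small hx (normr_ge0 cX) e0.
  exists N => n hn; apply: le_lt_trans (HN n hn).
  rewrite {2}(trunc_tail n x) (linD hX (trunc_l2 hH n x) (tail_l2 hH n hx)).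
  rewrite opprD addrA subrr add0r (ipnormN hip).
  apply: (le_trans (hcX _ (tail_l2 hH n hx))).
  apply: (le_trans (ler_wpM2r (sqrtr_ge0 _) (ler_norm cX))).
  rewrite ler_wpM2l ?normr_ge0 //; apply: ler_wsqrtr.
  have hb : forall M, ps ipH (tail n x) M <= l2_sqnorm ipH x - ps ipH x n.
    by move=> M'; exact: ps_tail.
  exact: (sq_le hb).2.
apply: (cvg_unique hip A).
have := cvgD hip B C; rewrite /cvg_to => h e e0; have [N HN] := h e e0; exists N => n hn.
rewrite (@Pf_shift _ _ _ _ hH T X w wp hT hX). exact: HN.
Qed.

Lemma arith_bound (R : realType) (p q r a b x y : R) :
  0 <= p -> 0 <= q -> 0 <= r -> 0 <= a -> 0 <= b -> 0 <= x ->
  x <= p * a + q * b -> y <= r ^+ 2 * b ^+ 2 ->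
  x ^+ 2 + y <= (p + q + r) ^+ 2 * (a ^+ 2 + b ^+ 2).
Proof.
move=> p0 q0 r0 a0 b0 x0 hx hy.
have h1 : x ^+ 2 <= (p * a + q * b) ^+ 2.
  by rewrite !expr2; apply: ler_pM.
have h2 := mulr_ge0 (mulr_ge0 p0 q0) (sqr_ge0 (a - b)).
have h3 : 0 <= a ^+ 2 + b ^+ 2 by rewrite addr_ge0 ?sqr_ge0.
have h4 : (p + q) ^+ 2 + r ^+ 2 <= (p + q + r) ^+ 2.
  have -> : (p + q + r) ^+ 2 = (p + q) ^+ 2 + r ^+ 2 + 2 * ((p + q) * r) by ring.
  rewrite lerDl mulr_ge0 // mulr_ge0 // addr_ge0 //.
have h5 := ler_wpM2r h3 h4.
have h6 : (p * a + q * b) ^+ 2 <= (p + q) ^+ 2 * (a ^+ 2 + b ^+ 2).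
  rewrite -subr_ge0.
  have -> : (p + q) ^+ 2 * (a ^+ 2 + b ^+ 2) - (p * a + q * b) ^+ 2 =
    (p * b) ^+ 2 + (q * a) ^+ 2 + p * q * (a - b) ^+ 2 + p * q * (a ^+ 2 + b ^+ 2) by ring.
  by rewrite !addr_ge0 ?sqr_ge0 // mulr_ge0 // mulr_ge0.
have h7 : r ^+ 2 * b ^+ 2 <= r ^+ 2 * (a ^+ 2 + b ^+ 2).
  by rewrite ler_wpM2l ?sqr_ge0 // lerDr sqr_ge0.
move: h1 h5 h6 h7 hy. rewrite mulrDl.
set A := x ^+ 2; set B := (p * a + q * b) ^+ 2; set C := (p + q) ^+ 2 * _; set D := r ^+ 2 * _.
set E := (p + q + r) ^+ 2 * _; set F := r ^+ 2 * b ^+ 2. lra.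
Qed.

Lemma sum_norm_bound (R : realType) (K H : lmodType R[i]) (ipK : K -> K -> R[i]) (ipH : H -> H -> R[i])
  (u v : K * (nat -> H)) (p q r : R) :
  0 <= p -> 0 <= q -> 0 <= r -> l2_mem ipH v.2 ->
  ipnorm ipK u.1 <= p * ipnorm ipK v.1 + q * l2_norm ipH v.2 ->
  l2_sqnorm ipH u.2 <= r ^+ 2 * l2_sqnorm ipH v.2 ->
  sum_norm ipK ipH u <= (p + q + r) * sum_norm ipK ipH v.
Proof.
move=> p0 q0 r0 hv h1 h2.
have s0 := l2_sqnorm_ge0 hv.
apply: sqrt_le; first by rewrite mulr_ge0 ?sqrtr_ge0 ?addr_ge0.
rewrite exprMn /sum_norm (@sqr_sqrtr _ (ipnorm ipK v.1 ^+ 2 + l2_sqnorm ipH v.2)); last by rewrite addr_ge0 ?sqr_ge0.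
have := @arith_bound _ p q r (ipnorm ipK v.1) (l2_norm ipH v.2) (ipnorm ipK u.1) (l2_sqnorm ipH u.2)
   p0 q0 r0 (ipnorm_ge0 _ _) (sqrtr_ge0 _) (ipnorm_ge0 _ _) h1.
by rewrite /l2_norm sqr_sqrtr //; apply.
Qed.

Lemma sum_norm_mono (R : realType) (K H : lmodType R[i]) (ipK : K -> K -> R[i]) (ipH : H -> H -> R[i])
  (u v : K * (nat -> H)) :
  ipnorm ipK u.1 <= ipnorm ipK v.1 -> l2_sqnorm ipH u.2 <= l2_sqnorm ipH v.2 ->
  sum_norm ipK ipH u <= sum_norm ipK ipH v.
Proof.
move=> h1 h2; apply: ler_wsqrtr; apply: lerD => //.
by rewrite !expr2; apply: ler_pM; rewrite ?ipnorm_ge0.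
Qed.

Definition Eop (R : realType) (H : lmodType R[i]) (w : nat -> R) (v : nat -> H) : nat -> H :=
  fun n => ((ew w n)%:C)%C *: v n.
Definition Einv (R : realType) (H : lmodType R[i]) (w : nat -> R) (v : nat -> H) : nat -> H :=
  fun n => (((ew w n)^-1)%:C)%C *: v n.

Lemma Eop_lin (R : realType) (H : lmodType R[i]) (w : nat -> R) (a : R[i]) (u v : nat -> H) :
  Eop w (a *: u + v) = a *: Eop w u + Eop w v.
Proof.
apply: funext => n; change (((ew w n)%:C)%C *: (a *: u n + v n) =
  a *: (((ew w n)%:C)%C *: u n) + ((ew w n)%:C)%C *: v n).
by rewrite scalerDr !scalerA mulrC.
Qed.

Lemma Einv_lin (R : realType) (H : lmodType R[i]) (w : nat -> R) (a : R[i]) (u v : nat -> H) :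
  Einv w (a *: u + v) = a *: Einv w u + Einv w v.
Proof.
apply: funext => n; change ((((ew w n)^-1)%:C)%C *: (a *: u n + v n) =
  a *: ((((ew w n)^-1)%:C)%C *: u n) + (((ew w n)^-1)%:C)%C *: v n).
by rewrite scalerDr !scalerA mulrC.
Qed.

Lemma Einv_Eop (R : realType) (H : lmodType R[i]) (w : nat -> R) (v : nat -> H) :
  Einv w (Eop w v) = v.
Proof.
apply: funext => n; rewrite /Einv /Eop scalerA -rmorphM mulVf ?scale1r //.
by rewrite gt_eqF // ew_pos.
Qed.

Lemma Eop_Einv (R : realType) (H : lmodType R[i]) (w : nat -> R) (v : nat -> H) :
  Eop w (Einv w v) = v.
Proof.
apply: funext => n; rewrite /Einv /Eop scalerA -rmorphM mulfV ?scale1r //.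
by rewrite gt_eqF // ew_pos.
Qed.

Lemma Eop_l2 (R : realType) (H : lmodType R[i]) (ipH : H -> H -> R[i]) (hH : inner_product ipH)
  (w : nat -> R) (M : R) (eM : forall n, ew w n <= M) v :
  l2_mem ipH v -> l2_mem ipH (Eop w v) /\ l2_sqnorm ipH (Eop w v) <= M ^+ 2 * l2_sqnorm ipH v.
Proof.
move=> hv; have M0 : 0 <= M := le_trans (ltW (ew_pos w 0)) (eM 0%N).
have hd : forall n, ipnorm ipH (Eop w v n) <= M * ipnorm ipH (v n).
  move=> n; rewrite /Eop (ipnormZr hH) ger0_norm; last exact: ltW (ew_pos w n).
  by rewrite ler_wpM2r ?ipnorm_ge0.
apply: sq_le => N; apply: (le_trans (@ps_dom _ _ ipH v (Eop w v) M M0 hd N)).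
by rewrite ler_wpM2l ?sqr_ge0 // ps_le_sq.
Qed.

Lemma Einv_l2 (R : realType) (H : lmodType R[i]) (ipH : H -> H -> R[i]) (hH : inner_product ipH)
  (w : nat -> R) v :
  l2_mem ipH v -> l2_mem ipH (Einv w v) /\ l2_sqnorm ipH (Einv w v) <= 1 ^+ 2 * l2_sqnorm ipH v.
Proof.
move=> hv.
have hd : forall n, ipnorm ipH (Einv w v n) <= 1 * ipnorm ipH (v n).
  move=> n; rewrite /Einv (ipnormZr hH) ger0_norm; last by rewrite invr_ge0 ltW // ew_pos.
  rewrite ler_wpM2r ?ipnorm_ge0 // invf_le1 ?ew_ge1 //; exact: ew_pos.
apply: sq_le => N; apply: (le_trans (@ps_dom _ _ ipH v (Einv w v) 1 ler01 hd N)).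
by rewrite ler_wpM2l ?sqr_ge0 // ps_le_sq.
Qed.

Lemma ESE_contr (R : realType) (H : lmodType R[i]) (ipH : H -> H -> R[i]) (hH : inner_product ipH)
  (w : nat -> R) (wp : forall k, 0 < w k) v :
  l2_mem ipH v -> l2_sqnorm ipH (Einv w (wshift w (Eop w v))) <= l2_sqnorm ipH v.
Proof.
move=> hv; have hb : forall N, ps ipH (Einv w (wshift w (Eop w v))) N <= l2_sqnorm ipH v.
  have y0 : ipnorm ipH (Einv w (wshift w (Eop w v)) 0%N) = 0.
    by rewrite /Einv /wshift scaler0 (ipnorm0 hH).
  have ys : forall n, ipnorm ipH (Einv w (wshift w (Eop w v)) n.+1) <= 1 * ipnorm ipH (v n).
    move=> n; rewrite /Einv /wshift /Eop !scalerA -!rmorphM (ipnormZr hH) mul1r.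
    rewrite ger0_norm; last by rewrite !mulr_ge0 // ?invr_ge0 ltW // ?ew_pos // wp.
    apply: ler_piMl; first exact: ipnorm_ge0.
    rewrite -mulrA mulrC ler_pdivrMr ?ew_pos // mul1r; exact: ew_step.
  move=> N; apply: (le_trans (@ps_dom_shift _ _ ipH v _ 1 ler01 y0 ys N)).
  by rewrite expr1n mul1r ps_le_sq.
exact: (sq_le hb).2.
Qed.

Lemma fstZD (R : realType) (K H : lmodType R[i]) (a : R[i]) (u v : K * (nat -> H)) :
  (a *: u + v).1 = a *: u.1 + v.1.
Proof. reflexivity. Qed.
Lemma sndZD (R : realType) (K H : lmodType R[i]) (a : R[i]) (u v : K * (nat -> H)) :
  (a *: u + v).2 = a *: u.2 + v.2.
Proof. reflexivity. Qed.
Lemma pairZD (R : realType) (K H : lmodType R[i]) (a : R[i]) (x1 y1 : K) (x2 y2 : nat -> H) :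
  a *: (x1, x2) + (y1, y2) = (a *: x1 + y1, a *: x2 + y2).
Proof. reflexivity. Qed.

Unset Implicit Arguments.

Theorem theorem4p7 (R : realType)
    (H : lmodType R[i]) (ipH : H -> H -> R[i]) (hH : hilbert_space ipH)
    (K : lmodType R[i]) (ipK : K -> K -> R[i]) (hK : hilbert_space ipK)
    (w : nat -> R) (w_pos : forall k, 0 < w k)
    (hbeta : exists M : R, forall n k : nat, beta w (n + k) / beta w n <= M)
    (T : K -> K)
    (T_bdd : bounded_op (fun _ => True) (ipnorm ipK) (fun _ => True) (ipnorm ipK) T)
    (T_sim : similar_to_contraction (fun _ => True) (ipnorm ipK) T)
    (X : (nat -> H) -> K)
    (X_bdd : bounded_op (l2_mem ipH) (l2_norm ipH) (fun _ => True) (ipnorm ipK) X)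
    (hnear : exists s : R, forall (N : nat) (x : nat -> H),
        sum_norm ipK ipH
          (\sum_(n < N.+1) (((beta w n)^-1)%:C)%C *:
              (iter n (RX T X w) (embH0 K (x n)) - iter n (R0 T w) (embH0 K (x n))))
        <= s * Num.sqrt (\sum_(n < N.+1) ipnorm ipH (x n) ^+ 2)) :
  similar_to_contraction (@sum_mem R K H ipH) (sum_norm ipK ipH) (RX T X w).
Proof.
have [hipH _] := hH; have hipK := hK.1.
case: T_bdd => _ hT [cT hcT'].
have hcT : forall u, ipnorm ipK (T u) <= cT * ipnorm ipK u := fun u => hcT' u I.
case: X_bdd => _ hX [cX hcX].
case: T_sim => LT [LTi [[_ hLT [cL hcL]] [_ hLTi [cLi hcLi]] hinv hcontr]].
case: hbeta => M hM; case: hnear => s hs.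
have T0 : T 0 = 0 := lin0 hT I.
have hP := fun N x => @hypP _ _ _ hipH _ _ hipK w T X T0 s hs N x.
have s0 : 0 <= `|s| := normr_ge0 s.
have wM : forall k, w k <= M := fun k => @w_le _ w M k w_pos hM.
have eM : forall n, ew w n <= M := fun n => @ew_le _ w M n w_pos hM.
have M0 : 0 <= M := le_trans (ltW (ew_pos w 0)) (eM 0%N).
set Y := Yop ipK T X w.
have Yl : islin (l2_mem ipH) Y := @Yop_lin _ _ _ _ hipH _ hK _ _ w hT hX _ s0 hP.
have Yb : forall x, l2_mem ipH x -> ipnorm ipK (Y x) <= `|s| * l2_norm ipH x :=
  @Yop_bound _ _ _ _ hipH _ hK _ _ w hT hX _ s0 hP.
have Ys : forall x, l2_mem ipH x -> Y (wshift w x) = T (Y x) + X x :=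
  @Yop_shift _ _ _ _ hipH _ hK _ _ w w_pos M wM hT cT hcT hX cX hcX _ s0 hP.
have El : forall v, l2_mem ipH v -> l2_mem ipH (Eop w v) := fun v hv => (Eop_l2 hipH eM hv).1.
have Eil : forall v, l2_mem ipH v -> l2_mem ipH (Einv w v) := fun v hv => (Einv_l2 hipH w hv).1.
have hcL' : forall u, ipnorm ipK (LT u) <= `|cL| * ipnorm ipK u.
  move=> u; apply: (le_trans (hcL u I)); by rewrite ler_wpM2r ?ipnorm_ge0 // ler_norm.
have hcLi' : forall u, ipnorm ipK (LTi u) <= `|cLi| * ipnorm ipK u.
  move=> u; apply: (le_trans (hcLi u I)); by rewrite ler_wpM2r ?ipnorm_ge0 // ler_norm.
exists (fun v => (LT v.1 + Y (Eop w v.2), Eop w v.2)).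
exists (fun v => (LTi (v.1 - Y v.2), Einv w v.2)).
split.
- split.
  + move=> v hv; exact: El.
  + move=> a u v hu hv; rewrite pairZD fstZD sndZD Eop_lin hLT // Yl; [|exact: El hu|exact: El hv].
    congr pair; rewrite scalerDr addrACA. reflexivity.
  + exists (`|cL| + `|s| * M + M); move=> v hv.
    apply: sum_norm_bound => //; rewrite ?mulr_ge0 //=.
    * apply: (le_trans (ipnormD hipK _ _)); apply: lerD; first exact: hcL'.
      apply: (le_trans (Yb _ (El _ hv))); rewrite -mulrA ler_wpM2l //.
      rewrite /l2_norm -(ger0_norm M0) -sqrtr_sqr -sqrtrM ?sqr_ge0 //.
      apply: ler_wsqrtr; exact: (Eop_l2 hipH eM hv).2.
    * exact: (Eop_l2 hipH eM hv).2.
- split.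
  + move=> v hv; exact: Eil.
  + move=> a u v hu hv; rewrite pairZD fstZD sndZD Einv_lin Yl //.
    congr pair.
    have -> : a *: u.1 + v.1 - (a *: Y u.2 + Y v.2) = a *: (u.1 - Y u.2) + (v.1 - Y v.2).
      by rewrite scalerBr opprD addrACA.
    by rewrite hLTi.
  + exists (`|cLi| + `|cLi| * `|s| + 1); move=> v hv.
    apply: sum_norm_bound => //; rewrite ?mulr_ge0 ?normr_ge0 //=.
    * apply: (le_trans (hcLi' _)); rewrite -mulrA -mulrDr ler_wpM2l ?normr_ge0 //.
      apply: (le_trans (ipnormD hipK _ _)); rewrite (ipnormN hipK); apply: lerD => //.
      exact: Yb.
    * exact: (Einv_l2 hipH w hv).2.
- move=> v hv; split.
  + rewrite /= addrK (hinv _ I).1 Einv_Eop; by case: v hv.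
  + rewrite /= (hinv _ I).2 Eop_Einv subrK; by case: v hv.
- move=> v hv.
  have hE := El _ hv. have e3 : forall a b c : K, a + b + c - (b + c) = a by move=> a b c; rewrite -[a + b + c]addrA addrK.
  rewrite /RX /= (Ys _ hE) (linD hT I I) e3.
  apply: sum_norm_mono => /=; first exact: hcontr.
  exact: (ESE_contr hipH w_pos hv).
Qed.
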